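(* For every $\widetilde r\in\mathbb{N}$ and $r_0\in\{0,\dots,b-1\}$, \[\mathrm{Var}(\mu^{(b\widetilde r+r_0)})=\frac{b-r_0}{b}\mathrm{Var}(\mu^{(\widetilde r)})+\frac{r_0}{b}\mathrm{Var}(\mu^{(\widetilde r+1)})+r_0(b-r_0).\]
   Context: Fix an integer $b\ge2$. For $n\in\mathbb{N}$ with base-$b$ digits $n_k$, $s(n):=\sum_kn_k$. For $r,n\in\mathbb{N}$, $\Delta^{(r)}(n):=s(n+r)-s(n)$, and $\mu^{(r)}(d):=\lim_{N\to\infty}\frac1N|\{n<N:\Delta^{(r)}(n)=d\}|$ for $d\in\mathbb{Z}$; these limits exist and $\mu^{(r)}$ is a probability measure on $\mathbb{Z}$ with finite moments and mean zero. $\mathrm{Var}(\mu^{(r)})$ is its variance. *)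

(* Defs.v *)
From Stdlib Require Import Reals ZArith Arith List Lia.
From Coquelicot Require Import Coquelicot.
Open Scope R_scope.

(* Base-b digit sum, by recursion with fuel (fuel n suffices for b >= 2). *)
Fixpoint digsum_aux (fuel b n : nat) : nat :=
  match fuel with
  | O => O
  | S f => (n mod b + digsum_aux f b (n / b))%nat
  end.

Definition digsum (b n : nat) : nat := digsum_aux n b n.

Definition Delta (b r n : nat) : Z :=
  (Z.of_nat (digsum b (n + r)) - Z.of_nat (digsum b n))%Z.

Definition count_eq (b r : nat) (d : Z) (N : nat) : nat :=
  length (filter (fun n => Z.eqb (Delta b r n) d) (seq 0 N)).

Definition mu (b r : nat) (d : Z) : R :=
  real (Lim_seq (fun N => INR (count_eq b r d N) / INR N)).

Definition sumZ (f : Z -> R) : R :=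
  Series (fun k => f (Z.of_nat k)) + Series (fun k => f (- Z.of_nat (S k))%Z).

Definition mean_mu (b r : nat) : R := sumZ (fun d => IZR d * mu b r d).

Definition Var_mu (b r : nat) : R :=
  sumZ (fun d => (IZR d - mean_mu b r) ^ 2 * mu b r d).

(* Main.v *)
Require Import Defs.
From Stdlib Require Import Reals ZArith Arith List Lia Lra.
From Coquelicot Require Import Coquelicot.
Open Scope R_scope.
Open Scope nat_scope.

Lemma divmod_bm (b m n0 : nat) : (n0 < b)%nat -> ((b*m+n0)/b = m /\ (b*m+n0) mod b = n0)%nat.
Proof.
  intros H. split.
  - symmetry; apply Nat.div_unique with n0; lia.
  - symmetry; apply Nat.mod_unique with m; lia.
Qed.

Lemma aux0 b f : digsum_aux f b 0 = 0%nat.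
Proof.
  induction f; simpl; auto. rewrite Nat.Div0.mod_0_l, Nat.Div0.div_0_l, IHf. reflexivity.
Qed.

Lemma aux_fuel b : (2 <= b)%nat -> forall f1 f2 n, (n <= f1)%nat -> (n <= f2)%nat ->
  digsum_aux f1 b n = digsum_aux f2 b n.
Proof.
  intros Hb f1. induction f1 as [|f1 IH]; intros f2 n H1 H2.
  - assert (n = 0%nat) by lia. subst. rewrite !aux0. reflexivity.
  - destruct f2 as [|f2].
    + assert (n = 0%nat) by lia. subst. rewrite !aux0. reflexivity.
    + simpl. destruct n as [|n].
      * rewrite Nat.Div0.div_0_l, !aux0. reflexivity.
      * f_equal. apply IH.
        -- assert (S n / b < S n)%nat by (apply Nat.div_lt; lia). lia.
        -- assert (S n / b < S n)%nat by (apply Nat.div_lt; lia). lia.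
Qed.

Lemma digsum_step b m n0 : (2 <= b)%nat -> (n0 < b)%nat ->
  digsum b (b*m+n0) = (n0 + digsum b m)%nat.
Proof.
  intros Hb Hn. unfold digsum.
  destruct (divmod_bm b m n0 Hn) as [Hd Hm].
  destruct (b*m+n0)%nat as [|f] eqn:E.
  - rewrite <- Hd, <- Hm, Nat.Div0.div_0_l, Nat.Div0.mod_0_l. reflexivity.
  - simpl digsum_aux at 1. rewrite Hd, Hm. f_equal.
    apply aux_fuel; auto; nia.
Qed.

Lemma Delta_step (b rt r0 m n0 : nat) : (2 <= b)%nat -> (n0 < b)%nat -> (r0 < b)%nat ->
  Defs.Delta b (b*rt+r0)%nat (b*m+n0)%nat =
  if Nat.ltb (n0 + r0) b then (Z.of_nat r0 + Defs.Delta b rt m)%Z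
  else (Z.of_nat r0 - Z.of_nat b + Defs.Delta b (rt+1)%nat m)%Z.
Proof.
  intros Hb Hn Hr. unfold Defs.Delta.
  destruct (Nat.ltb_spec (n0+r0) b).
  - replace (b*m+n0+(b*rt+r0))%nat with (b*(m+rt)+(n0+r0))%nat by ring.
    rewrite !digsum_step by lia. lia.
  - replace (b*m+n0+(b*rt+r0))%nat with (b*(m+(rt+1))+(n0+r0-b))%nat by nia.
    rewrite !digsum_step by lia. lia.
Qed.

Lemma digsum_le b n : (2 <= b)%nat -> (digsum b n <= n)%nat.
Proof.
  intros Hb. induction n as [n IH] using lt_wf_ind.
  destruct (Nat.eq_dec n 0) as [->|Hn].
  - unfold digsum. simpl. lia.
  - assert (E : n = (b*(n/b) + n mod b)%nat) by (apply Nat.div_mod; lia).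
    rewrite E, digsum_step by (try apply Nat.mod_upper_bound; lia).
    assert (n / b < n)%nat by (apply Nat.div_lt; lia).
    specialize (IH (n/b) H). nia.
Qed.

Lemma Delta_le b : (2 <= b)%nat -> forall n r, (Defs.Delta b r n <= Z.of_nat r)%Z.
Proof.
  intros Hb n. induction n as [n IH] using lt_wf_ind. intros r.
  assert (Er : r = (b*(r/b) + r mod b)%nat) by (apply Nat.div_mod; lia).
  assert (Hr : (r mod b < b)%nat) by (apply Nat.mod_upper_bound; lia).
  destruct (Nat.eq_dec n 0) as [->|Hn].
  - unfold Defs.Delta. simpl. pose proof (digsum_le b r Hb). replace (digsum b 0) with 0 by reflexivity. simpl. lia.
  - assert (E : n = (b*(n/b) + n mod b)%nat) by (apply Nat.div_mod; lia).
    assert (Hm : (n mod b < b)%nat) by (apply Nat.mod_upper_bound; lia).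
    assert (n / b < n)%nat by (apply Nat.div_lt; lia).
    rewrite E, Er, Delta_step by lia.
    pose proof (IH _ H (r/b)). pose proof (IH _ H (r/b+1)%nat).
    destruct (n mod b + r mod b <? b)%nat; nia.
Qed.

Definition cnt (p : nat -> bool) (N : nat) : nat := length (filter p (seq 0 N)).

Lemma cnt_S p N : cnt p (S N) = cnt p N + Nat.b2n (p N).
Proof.
  unfold cnt. rewrite seq_S, filter_app, length_app. simpl.
  destruct (p N); simpl; lia.
Qed.

Lemma cnt_0 p : cnt p 0 = 0.
Proof. reflexivity. Qed.

Lemma cnt_le p N : cnt p N <= N.
Proof. induction N. reflexivity. rewrite cnt_S. destruct (p N); simpl; lia. Qed.

Lemma cnt_ext p q N : (forall n, n < N -> p n = q n) -> cnt p N = cnt q N.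
Proof.
  induction N; intros H; auto. rewrite !cnt_S, H by lia. rewrite IHN; auto.
Qed.

Lemma cnt_add p N K : cnt p (N+K) = cnt p N + cnt (fun i => p (N+i)) K.
Proof.
  induction K. rewrite Nat.add_0_r, cnt_0; lia.
  rewrite Nat.add_succ_r, !cnt_S, IHK. lia.
Qed.

Lemma cnt_mono p N K : cnt p N <= cnt p (N+K) <= cnt p N + K.
Proof.
  rewrite cnt_add. pose proof (cnt_le (fun i => p (N+i)) K). lia.
Qed.

Lemma cnt_ite k x y B : cnt (fun i => if i <? k then x else y) B =
   Nat.min k B * Nat.b2n x + (B - k) * Nat.b2n y.
Proof.
  induction B. rewrite cnt_0, Nat.min_0_r. simpl. lia.
  rewrite cnt_S, IHB. destruct (Nat.ltb_spec B k).
  - replace (Nat.min k (S B)) with (S (Nat.min k B)) by lia. replace (S B - k) with (B - k) by lia. destruct x, y; simpl; lia.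
  - replace (Nat.min k (S B)) with (Nat.min k B) by lia. replace (S B - k) with (S (B - k)) by lia. destruct x, y; simpl; lia.
Qed.

Lemma cnt_split b k p q1 q2 :
  k <= b ->
  (forall m n0, n0 < b -> p (b*m+n0) = if n0 <? k then q1 m else q2 m) ->
  forall M, cnt p (b*M) = k * cnt q1 M + (b-k) * cnt q2 M.
Proof.
  intros Hk H M. induction M. rewrite Nat.mul_0_r, !cnt_0; lia.
  replace (b * S M) with (b*M + b) by ring.
  rewrite cnt_add, IHM, !cnt_S.
  rewrite (cnt_ext (fun i => p (b*M+i)) (fun i => if i <? k then q1 M else q2 M)).
  - rewrite cnt_ite. replace (Nat.min k b) with k by lia. destruct (q1 M), (q2 M); simpl; nia.
  - intros n Hn; apply H; auto.
Qed.
Close Scope nat_scope.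
Open Scope R_scope.

Lemma filterlim_div (b : nat) : (1 <= b)%nat -> filterlim (fun N => (N / b)%nat) eventually eventually.
Proof.
  intros Hb P [N0 HN]. exists (N0*b)%nat. intros n Hn. apply HN.
  apply Nat.div_le_lower_bound; lia.
Qed.

Lemma inv_n : is_lim_seq (fun N => / INR N) 0.
Proof.
  replace (Finite 0) with (Rbar_inv p_infty) by reflexivity.
  apply is_lim_seq_inv. apply is_lim_seq_INR. discriminate.
Qed.

Lemma dens_split (b k : nat) p q1 q2 (l1 l2 : R) : (1 <= b)%nat -> (k <= b)%nat ->
  (forall m n0, (n0 < b)%nat -> p (b*m+n0)%nat = if (n0 <? k)%nat then q1 m else q2 m) ->
  is_lim_seq (fun N => INR (cnt q1 N) / INR N) l1 ->
  is_lim_seq (fun N => INR (cnt q2 N) / INR N) l2 ->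
  is_lim_seq (fun N => INR (cnt p N) / INR N) ((INR k * l1 + INR (b-k) * l2) / INR b).
Proof.
  intros Hb Hk Hs H1 H2.
  set (V := fun M => INR k * (INR (cnt q1 M)/INR M) + INR (b-k) * (INR (cnt q2 M)/INR M)).
  assert (HV : is_lim_seq V (INR k * l1 + INR (b-k) * l2)).
  { apply is_lim_seq_plus'; apply is_lim_seq_mult'; auto; apply is_lim_seq_const. }
  pose proof (is_lim_seq_subseq V _ _ (filterlim_div b Hb) HV) as HVs. simpl in HVs.
  assert (Hbpos : 0 < INR b) by (apply lt_0_INR; lia).
  assert (HW : is_lim_seq (fun N => INR (N / b) / INR N) (/ INR b)).
  { apply is_lim_seq_le_le_loc with (fun N => / INR b - / INR N) (fun N => / INR b).
    - exists 1%nat. intros N HN.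
      assert (HNp : 0 < INR N) by (apply lt_0_INR; lia).
      pose proof (Nat.mul_div_le N b) as E1.
      pose proof (Nat.div_mod N b) as E2. pose proof (Nat.mod_upper_bound N b) as E3.
      assert (A1 : INR b * INR (N/b) <= INR N) by (rewrite <- mult_INR; apply le_INR; lia).
      assert (A2 : INR N <= INR b * INR (N/b) + INR b).
      { rewrite <- mult_INR, <- plus_INR; apply le_INR. specialize (E2 ltac:(lia)). specialize (E3 ltac:(lia)). lia. }
      set (q := INR (N/b)) in *.
      split.
      + apply Rmult_le_reg_r with (INR b * INR N). nra.
        replace ((/ INR b - / INR N) * (INR b * INR N)) with (INR N - INR b) by (field; lra).
        replace (q / INR N * (INR b * INR N)) with (INR b * q) by (field; lra). lra.
      + apply Rmult_le_reg_r with (INR b * INR N). nra.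
        replace (/ INR b * (INR b * INR N)) with (INR N) by (field; lra).
        replace (q / INR N * (INR b * INR N)) with (INR b * q) by (field; lra). lra.
    - replace (Finite (/ INR b)) with (Finite (/ INR b - 0)) by (f_equal; ring).
      apply is_lim_seq_minus'. apply is_lim_seq_const. apply inv_n.
    - apply is_lim_seq_const. }
  set (E := fun N => (INR (cnt p N) - INR (cnt p (b*(N/b)))) / INR N).
  assert (HE : is_lim_seq E 0).
  { apply is_lim_seq_le_le_loc with (fun _ => 0) (fun N => INR b * / INR N).
    - exists 1%nat. intros N HN.
      assert (HNp : 0 < INR N) by (apply lt_0_INR; lia).
      pose proof (Nat.div_mod N b ltac:(lia)) as E2. pose proof (Nat.mod_upper_bound N b ltac:(lia)) as E3.
      pose proof (cnt_mono p (b*(N/b)) (N mod b)) as M. rewrite <- E2 in M.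
      assert (A1 : INR (cnt p (b*(N/b))) <= INR (cnt p N)) by (apply le_INR; lia).
      assert (A2 : INR (cnt p N) <= INR (cnt p (b*(N/b))) + INR b) by (rewrite <- plus_INR; apply le_INR; lia).
      unfold E. split.
      + apply Rdiv_le_0_compat; lra.
      + unfold Rdiv. apply Rmult_le_compat_r. left; apply Rinv_0_lt_compat; lra. lra.
    - apply is_lim_seq_const.
    - replace (Finite 0) with (Finite (INR b * 0)) by (f_equal; ring).
      apply is_lim_seq_mult'. apply is_lim_seq_const. apply inv_n. }
  apply is_lim_seq_ext_loc with (fun N => V (N/b)%nat * (INR (N/b) / INR N) + E N).
  - exists b. intros N HN.
    assert (HNp : 0 < INR N) by (apply lt_0_INR; lia).
    assert (Hq : (1 <= N / b)%nat) by (apply Nat.div_le_lower_bound; lia).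
    assert (Hqp : 0 < INR (N/b)) by (apply lt_0_INR; lia).
    unfold V, E. rewrite (cnt_split b k p q1 q2 Hk Hs (N/b)).
    rewrite plus_INR, !mult_INR. field. lra.
  - replace ((INR k * l1 + INR (b - k) * l2) / INR b) with
      ((INR k * l1 + INR (b - k) * l2) * / INR b + 0) by (field; lra).
    apply is_lim_seq_plus'; auto. apply is_lim_seq_mult'; auto.
Qed.

Definition pr b r d := fun n => Z.eqb (Defs.Delta b r n) d.
Definition dens b r d (l : R) := is_lim_seq (fun N => INR (count_eq b r d N) / INR N) l.

Lemma count_cnt b r d N : count_eq b r d N = cnt (pr b r d) N.
Proof. reflexivity. Qed.

Lemma split_hyp (b rt r0 : nat) d : (2 <= b)%nat -> (r0 < b)%nat ->
  forall m n0, (n0 < b)%nat -> pr b (b*rt+r0)%nat d (b*m+n0)%nat =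
   if (n0 <? b - r0)%nat then pr b rt (d - Z.of_nat r0)%Z m else pr b (rt+1)%nat (d - Z.of_nat r0 + Z.of_nat b)%Z m.
Proof.
  intros Hb Hr m n0 Hn. unfold pr. rewrite Delta_step by lia.
  destruct (Nat.ltb_spec (n0 + r0) b); destruct (Nat.ltb_spec n0 (b - r0)); try lia;
  destruct (Z.eqb_spec (Z.of_nat r0 + Defs.Delta b rt m) d);
  destruct (Z.eqb_spec (Z.of_nat r0 - Z.of_nat b + Defs.Delta b (rt+1) m) d);
  destruct (Z.eqb_spec (Defs.Delta b rt m) (d - Z.of_nat r0));
  destruct (Z.eqb_spec (Defs.Delta b (rt+1) m) (d - Z.of_nat r0 + Z.of_nat b)); auto; lia.
Qed.

Lemma dens_rec (b rt r0 : nat) d (l1 l2 : R) : (2 <= b)%nat -> (r0 < b)%nat ->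
  dens b rt (d - Z.of_nat r0)%Z l1 -> dens b (rt+1)%nat (d - Z.of_nat r0 + Z.of_nat b)%Z l2 ->
  dens b (b*rt+r0)%nat d ((INR (b-r0) * l1 + INR r0 * l2) / INR b).
Proof.
  intros Hb Hr H1 H2. unfold dens in *.
  replace (INR r0) with (INR (b - (b - r0))) by (f_equal; lia).
  eapply is_lim_seq_ext. intros N. rewrite count_cnt. reflexivity.
  apply dens_split with (q1 := pr b rt (d - Z.of_nat r0)%Z) (q2 := pr b (rt+1)%nat (d - Z.of_nat r0 + Z.of_nat b)%Z); try lia.
  - apply split_hyp; lia.
  - eapply is_lim_seq_ext; [|exact H1]. intros; reflexivity.
  - eapply is_lim_seq_ext; [|exact H2]. intros; reflexivity.
Qed.

Lemma dens_zero b r d : (2 <= b)%nat -> (Z.of_nat r < d)%Z -> dens b r d 0.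
Proof.
  intros Hb Hd. unfold dens.
  eapply is_lim_seq_ext; [|apply is_lim_seq_const]. intros N. simpl.
  rewrite count_cnt, (cnt_ext _ (fun _ => false)).
  - replace (cnt (fun _ => false) N) with 0%nat. simpl. unfold Rdiv. ring.
    induction N; auto. rewrite cnt_S. simpl. lia.
  - intros n _. unfold pr. pose proof (Delta_le b Hb n r). apply Z.eqb_neq. lia.
Qed.

Lemma dens_r0 b d : dens b 0 d (if Z.eqb d 0 then 1 else 0).
Proof.
  unfold dens. destruct (Z.eqb_spec d 0).
  - subst. apply is_lim_seq_ext_loc with (fun _ => 1); [|apply is_lim_seq_const].
    exists 1%nat. intros N HN. rewrite count_cnt, (cnt_ext _ (fun _ => true)).
    + replace (cnt (fun _ => true) N) with N. field. apply not_0_INR. lia.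
      clear. induction N; auto. rewrite cnt_S. simpl. lia.
    + intros n _. unfold pr, Defs.Delta. rewrite Nat.add_0_r. apply Z.eqb_eq. lia.
  - eapply is_lim_seq_ext; [|apply is_lim_seq_const]. intros N. simpl.
    rewrite count_cnt, (cnt_ext _ (fun _ => false)).
    + replace (cnt (fun _ => false) N) with 0%nat. simpl. unfold Rdiv. ring.
      induction N; auto. rewrite cnt_S. simpl. lia.
    + intros m _. unfold pr, Defs.Delta. rewrite Nat.add_0_r. apply Z.eqb_neq. lia.
Qed.

Lemma dens_exists_k b : (2 <= b)%nat -> forall k r d, (Z.of_nat r - d < Z.of_nat k)%Z -> exists l, dens b r d l.
Proof.
  intros Hb k. induction k; intros r d Hk.
  - exists 0. apply dens_zero; lia.
  - destruct (Z_lt_le_dec (Z.of_nat r) d). { exists 0. apply dens_zero; lia. }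
    destruct (Nat.eq_dec r 0) as [->|Hr0]. { eexists. apply dens_r0. }
    assert (Er : r = (b*(r/b) + r mod b)%nat) by (apply Nat.div_mod; lia).
    assert (Hr : (r mod b < b)%nat) by (apply Nat.mod_upper_bound; lia).
    set (rt := (r/b)%nat) in *. set (r0 := (r mod b)%nat) in *.
    assert (C2 : exists l, dens b (rt+1)%nat (d - Z.of_nat r0 + Z.of_nat b)%Z l).
    { apply IHk. nia. }
    assert (C1 : exists l, dens b rt (d - Z.of_nat r0)%Z l).
    { destruct (Nat.eq_dec rt 0) as [E|E].
      - rewrite E. eexists. apply dens_r0.
      - apply IHk. nia. }
    destruct C1 as [l1 C1]. destruct C2 as [l2 C2].
    eexists. rewrite Er. apply dens_rec; eauto.
Qed.

Lemma dens_exists b r d : (2 <= b)%nat -> exists l, dens b r d l.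
Proof.
  intros Hb. apply (dens_exists_k b Hb (Z.to_nat (Z.of_nat r - d + 1))). lia.
Qed.

Lemma mu_spec b r d l : dens b r d l -> mu b r d = l.
Proof. intros H. unfold mu. rewrite (is_lim_seq_unique _ _ H). reflexivity. Qed.

Lemma mu_dens b r d : (2 <= b)%nat -> dens b r d (mu b r d).
Proof. intros Hb. destruct (dens_exists b r d Hb) as [l H]. rewrite (mu_spec _ _ _ _ H). exact H. Qed.

Lemma mu_rec (b rt r0 : nat) d : (2 <= b)%nat -> (r0 < b)%nat ->
  mu b (b*rt+r0)%nat d = (INR (b-r0) * mu b rt (d - Z.of_nat r0)%Z
                          + INR r0 * mu b (rt+1)%nat (d - Z.of_nat r0 + Z.of_nat b)%Z) / INR b.
Proof.
  intros Hb Hr. apply mu_spec. apply dens_rec; auto; apply mu_dens; auto.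
Qed.

Lemma mu_0 b d : mu b 0 d = if Z.eqb d 0 then 1 else 0.
Proof. apply mu_spec, dens_r0. Qed.

Lemma mu_zero b r d : (2 <= b)%nat -> (Z.of_nat r < d)%Z -> mu b r d = 0.
Proof. intros; apply mu_spec, dens_zero; auto. Qed.

Lemma mu_bounds b r d : (2 <= b)%nat -> 0 <= mu b r d <= 1.
Proof.
  intros Hb. pose proof (mu_dens b r d Hb) as H. unfold dens in H.
  assert (B : forall N, 0 <= INR (count_eq b r d N) / INR N <= 1).
  { intros N. destruct N as [|N].
    - simpl. unfold Rdiv. rewrite Rmult_0_l. lra.
    - assert (0 < INR (S N)) by (apply lt_0_INR; lia).
      pose proof (cnt_le (pr b r d) (S N)) as C. rewrite <- count_cnt in C.
      apply le_INR in C. split.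
      + apply Rdiv_le_0_compat; auto. apply pos_INR.
      + apply Rmult_le_reg_r with (INR (S N)); auto. field_simplify; lra. }
  split.
  - change (Rbar_le 0 (mu b r d)). eapply is_lim_seq_le; [|apply is_lim_seq_const|exact H]. intros; apply B.
  - change (Rbar_le (mu b r d) 1). eapply is_lim_seq_le; [|exact H|apply is_lim_seq_const]. intros; apply B.
Qed.

Definition exZ (f : Z -> R) := ex_series (fun k => f (Z.of_nat k)) /\ ex_series (fun k => f (- Z.of_nat (S k))%Z).

Lemma exZ_ext f g : (forall d, f d = g d) -> exZ f -> exZ g.
Proof. intros H [H1 H2]. split; [eapply ex_series_ext; [|exact H1]|eapply ex_series_ext; [|exact H2]]; intros; apply H. Qed.

Lemma sumZ_ext f g : (forall d, f d = g d) -> sumZ f = sumZ g.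
Proof. intros H. unfold sumZ. f_equal; apply Series_ext; intros; apply H. Qed.

Lemma exZ_plus f g : exZ f -> exZ g -> exZ (fun d => f d + g d).
Proof. intros [A B] [C D]. split; apply (ex_series_plus _ _ A C) || apply (ex_series_plus _ _ B D). Qed.

Lemma sumZ_plus f g : exZ f -> exZ g -> sumZ (fun d => f d + g d) = sumZ f + sumZ g.
Proof. intros [A B] [C D]. unfold sumZ. rewrite (Series_plus _ _ A C), (Series_plus _ _ B D). ring. Qed.

Lemma exZ_scal c f : exZ f -> exZ (fun d => c * f d).
Proof. intros [A B]. split; apply (ex_series_scal_l c _ A) || apply (ex_series_scal_l c _ B). Qed.

Lemma sumZ_scal c f : sumZ (fun d => c * f d) = c * sumZ f.
Proof. unfold sumZ. rewrite !Series_scal_l. ring. Qed.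

Lemma shift_p1 f : exZ f -> exZ (fun d => f (d+1)%Z) /\ sumZ (fun d => f (d+1)%Z) = sumZ f.
Proof.
  intros [A B].
  assert (A' : ex_series (fun k => f (Z.of_nat (S k)))) by (apply (ex_series_incr_1 (fun k => f (Z.of_nat k))); exact A).
  assert (E1 : forall k, f (Z.of_nat k + 1)%Z = f (Z.of_nat (S k))) by (intros; f_equal; lia).
  assert (E2 : forall k, f (- Z.of_nat (S (S k)) + 1)%Z = f (- Z.of_nat (S k))%Z) by (intros; f_equal; lia).
  assert (Bn : ex_series (fun k => f (- Z.of_nat (S k) + 1)%Z)).
  { apply (ex_series_incr_1 (fun k => f (- Z.of_nat (S k) + 1)%Z)).
    eapply ex_series_ext; [|exact B]. intros; simpl. symmetry; apply E2. }
  split. split.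
  - eapply ex_series_ext; [|exact A']. intros; symmetry; apply E1.
  - exact Bn.
  - unfold sumZ. rewrite (Series_incr_1 _ A), (Series_incr_1 _ Bn).
    rewrite (Series_ext (fun k => f (Z.of_nat k + 1)%Z) (fun k => f (Z.of_nat (S k)))) by apply E1.
    rewrite (Series_ext (fun k => f (- Z.of_nat (S (S k)) + 1)%Z) (fun k => f (- Z.of_nat (S k))%Z)) by apply E2.
    replace (- Z.of_nat 1 + 1)%Z with (Z.of_nat 0) by reflexivity. ring.
Qed.

Lemma shift_m1 f : exZ f -> exZ (fun d => f (d-1)%Z) /\ sumZ (fun d => f (d-1)%Z) = sumZ f.
Proof.
  intros [A B].
  assert (B' : ex_series (fun k => f (- Z.of_nat (S (S k)))%Z)) by (apply (ex_series_incr_1 (fun k => f (- Z.of_nat (S k))%Z)); exact B).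
  assert (E1 : forall k, f (Z.of_nat (S k) - 1)%Z = f (Z.of_nat k)) by (intros; f_equal; lia).
  assert (E2 : forall k, f (- Z.of_nat (S k) - 1)%Z = f (- Z.of_nat (S (S k)))%Z) by (intros; f_equal; lia).
  assert (An : ex_series (fun k => f (Z.of_nat k - 1)%Z)).
  { apply (ex_series_incr_1 (fun k => f (Z.of_nat k - 1)%Z)).
    eapply ex_series_ext; [|exact A]. intros; simpl. symmetry; apply E1. }
  split. split.
  - exact An.
  - eapply ex_series_ext; [|exact B']. intros; symmetry; apply E2.
  - unfold sumZ. rewrite (Series_incr_1 _ An), (Series_incr_1 _ B).
    rewrite (Series_ext (fun k => f (Z.of_nat (S k) - 1)%Z) (fun k => f (Z.of_nat k))) by apply E1.
    rewrite (Series_ext (fun k => f (- Z.of_nat (S k) - 1)%Z) (fun k => f (- Z.of_nat (S (S k)))%Z)) by apply E2.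
    replace (Z.of_nat 0 - 1)%Z with (- Z.of_nat 1)%Z by reflexivity. ring.
Qed.

Lemma shift_c : forall c f, exZ f -> exZ (fun d => f (d+c)%Z) /\ sumZ (fun d => f (d+c)%Z) = sumZ f.
Proof.
  intros c. induction c using Z.peano_ind; intros f Hf.
  - split. eapply exZ_ext; [|exact Hf]. intros; f_equal; lia.
    apply sumZ_ext. intros; f_equal; lia.
  - destruct (IHc f Hf) as [A B].
    destruct (shift_p1 _ A) as [C D]. split.
    + eapply exZ_ext; [|exact C]. intros; simpl; f_equal; lia.
    + rewrite <- B, <- D. apply sumZ_ext. intros; f_equal; lia.
  - destruct (IHc f Hf) as [A B].
    destruct (shift_m1 _ A) as [C D]. split.
    + eapply exZ_ext; [|exact C]. intros; simpl; f_equal; lia.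
    + rewrite <- B, <- D. apply sumZ_ext. intros; f_equal; lia.
Qed.

Definition mom (k : nat) (F : Z -> R) := fun d => IZR d ^ k * F d.

Record Mom (G : Z -> R) (s0 s1 s2 : R) : Prop := {
  m_ex0 : exZ (mom 0 G); m_ex1 : exZ (mom 1 G); m_ex2 : exZ (mom 2 G);
  m_s0 : sumZ (mom 0 G) = s0; m_s1 : sumZ (mom 1 G) = s1; m_s2 : sumZ (mom 2 G) = s2 }.

Lemma shift_one h g c : exZ h -> (forall d, g d = h (d + - c)%Z) -> exZ g /\ sumZ g = sumZ h.
Proof.
  intros Hh E. destruct (shift_c (-c) h Hh) as [A B]. split.
  - eapply exZ_ext; [|exact A]. intros; symmetry; apply E.
  - rewrite <- B. apply sumZ_ext. exact E.
Qed.

Lemma shift_mom G c s0 s1 s2 : Mom G s0 s1 s2 ->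
  Mom (fun d => G (d - c)%Z) s0 (s1 + IZR c * s0) (s2 + 2 * IZR c * s1 + IZR c ^ 2 * s0).
Proof.
  intros [A0 A1 A2 S0 S1 S2].
  set (h0 := mom 0 G).
  set (h1 := fun e => mom 1 G e + IZR c * mom 0 G e).
  set (h2 := fun e => mom 2 G e + (2 * IZR c) * mom 1 G e + IZR c ^ 2 * mom 0 G e).
  assert (X1 : exZ h1) by (apply exZ_plus; auto; apply exZ_scal; auto).
  assert (X2 : exZ h2) by (repeat apply exZ_plus; auto; apply exZ_scal; auto).
  assert (T1 : sumZ h1 = s1 + IZR c * s0) by (unfold h1; rewrite sumZ_plus, sumZ_scal; auto; try apply exZ_scal; congruence).
  assert (T2 : sumZ h2 = s2 + 2 * IZR c * s1 + IZR c ^ 2 * s0).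
  { unfold h2. rewrite sumZ_plus, sumZ_plus, !sumZ_scal; auto; try apply exZ_scal; auto.
    rewrite S0, S1, S2. ring. apply exZ_plus; auto; apply exZ_scal; auto. }
  assert (G1 : forall d, G (d - c)%Z = G (d + - c)%Z) by (intros; f_equal; lia).
  destruct (shift_one h0 (mom 0 (fun d => G (d - c)%Z)) c A0) as [B0 C0].
  { intros d. unfold h0, mom. rewrite G1. simpl. ring. }
  destruct (shift_one h1 (mom 1 (fun d => G (d - c)%Z)) c X1) as [B1 C1].
  { intros d. unfold h1, mom. rewrite G1, plus_IZR, opp_IZR. simpl. ring. }
  destruct (shift_one h2 (mom 2 (fun d => G (d - c)%Z)) c X2) as [B2 C2].
  { intros d. unfold h2, mom. rewrite G1, plus_IZR, opp_IZR. simpl. ring. }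
  constructor; auto.
  - rewrite C0. exact S0.
  - rewrite C1. exact T1.
  - rewrite C2. exact T2.
Qed.

Lemma mix_mom F G H a b c1 c2 g0 g1 g2 h0 h1 h2 :
  (forall d, F d = a * G (d - c1)%Z + b * H (d - c2)%Z) ->
  Mom G g0 g1 g2 -> Mom H h0 h1 h2 ->
  Mom F (a * g0 + b * h0) (a * (g1 + IZR c1 * g0) + b * (h1 + IZR c2 * h0))
        (a * (g2 + 2 * IZR c1 * g1 + IZR c1 ^ 2 * g0) + b * (h2 + 2 * IZR c2 * h1 + IZR c2 ^ 2 * h0)).
Proof.
  intros E MG MH.
  destruct (shift_mom G c1 _ _ _ MG) as [A0 A1 A2 S0 S1 S2].
  destruct (shift_mom H c2 _ _ _ MH) as [B0 B1 B2 T0 T1 T2].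
  assert (Ek : forall k d, mom k F d = a * mom k (fun d => G (d - c1)%Z) d + b * mom k (fun d => H (d - c2)%Z) d).
  { intros k d. unfold mom. rewrite E. ring. }
  constructor.
  - eapply exZ_ext. intros; symmetry; apply Ek. apply exZ_plus; apply exZ_scal; auto.
  - eapply exZ_ext. intros; symmetry; apply Ek. apply exZ_plus; apply exZ_scal; auto.
  - eapply exZ_ext. intros; symmetry; apply Ek. apply exZ_plus; apply exZ_scal; auto.
  - rewrite (sumZ_ext _ _ (Ek 0%nat)), sumZ_plus, !sumZ_scal by (apply exZ_scal; auto). congruence.
  - rewrite (sumZ_ext _ _ (Ek 1%nat)), sumZ_plus, !sumZ_scal by (apply exZ_scal; auto). congruence.
  - rewrite (sumZ_ext _ _ (Ek 2%nat)), sumZ_plus, !sumZ_scal by (apply exZ_scal; auto). congruence.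
Qed.

Lemma Mom_ext F G s0 s1 s2 : (forall d, F d = G d) -> Mom G s0 s1 s2 -> Mom F s0 s1 s2.
Proof.
  intros E [A0 A1 A2 S0 S1 S2].
  assert (Ek : forall k d, mom k F d = mom k G d) by (intros; unfold mom; rewrite E; ring).
  constructor; try (eapply exZ_ext; [intros; symmetry; apply Ek|]; auto);
  try (rewrite (sumZ_ext _ _ (Ek _)); auto).
Qed.

Lemma inv_Sn : is_lim_seq (fun n => / INR (S n)) 0.
Proof.
  apply (is_lim_seq_incr_1 (fun n => / INR n)).
  replace (Finite 0) with (Rbar_inv p_infty) by reflexivity.
  apply is_lim_seq_inv. apply is_lim_seq_INR. discriminate.
Qed.

Lemma geo_sq x : 0 < x < 1 -> ex_series (fun k => (INR k + 1)^2 * x^k).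
Proof.
  intros Hx.
  assert (Hpos : forall k, 0 < (INR k + 1)^2 * x^k).
  { intros k. apply Rmult_lt_0_compat. pose proof (pos_INR k). nra. apply pow_lt; lra. }
  eapply ex_series_ext.
  2: { apply (ex_series_DAlembert (fun k => (INR k + 1)^2 * x^k) x). lra.
       - intros n. pose proof (Hpos n). lra.
       - apply is_lim_seq_ext with (fun n => (1 + / INR (S n)) * (1 + / INR (S n)) * x).
         + intros n. rewrite Rabs_pos_eq.
           * rewrite S_INR. simpl. pose proof (pos_INR n). field. split. apply pow_nonzero. lra. lra.
           * apply Rlt_le, Rdiv_lt_0_compat; auto.
         + replace (Finite x) with (Finite ((1 + 0) * (1 + 0) * x)) by (f_equal; ring).
           apply is_lim_seq_mult'. apply is_lim_seq_mult';
           apply is_lim_seq_plus'; try apply is_lim_seq_const; apply inv_Sn.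
           apply is_lim_seq_const. }
  intros n. simpl. apply Rabs_pos_eq. apply Rlt_le, Hpos.
Qed.

Lemma exZ_bound f C x : 0 < x < 1 ->
  (forall k, Rabs (f (Z.of_nat k)) <= C * ((INR k + 1)^2 * x^k)) ->
  (forall k, Rabs (f (- Z.of_nat (S k))%Z) <= C * ((INR k + 1)^2 * x^k)) -> exZ f.
Proof.
  intros Hx H1 H2. split; eapply (@ex_series_le R_AbsRing R_CompleteNormedModule); try (intros n; apply H1 || apply H2);
  (eapply ex_series_ext; [intros; reflexivity|]); apply (@ex_series_scal_l R_AbsRing R_NormedModule C (fun k => (INR k + 1)^2 * x^k)); apply geo_sq; auto.
Qed.

Lemma pow_bound p y m : (p <= 2)%nat -> Rabs y <= m -> 1 <= m -> Rabs (y^p) <= m^2.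
Proof.
  intros Hp Hy Hm. rewrite <- RPow_abs. pose proof (Rabs_pos y).
  destruct p as [|[|[|p]]]; simpl; try lia; nra.
Qed.

Lemma Series_zero : Series (fun _ => 0) = 0.
Proof.
  rewrite (Series_ext _ (fun n => 0 * 1)) by (intros; ring). rewrite Series_scal_l. ring.
Qed.

Lemma single f : (forall d, d <> 0%Z -> f d = 0) -> exZ f /\ sumZ f = f 0%Z.
Proof.
  intros H.
  assert (X : exZ f).
  { apply exZ_bound with (Rabs (f 0%Z)) (1/2). lra.
    - intros [|k].
      + simpl. lra.
      + rewrite H by lia. rewrite Rabs_R0. apply Rmult_le_pos. apply Rabs_pos.
        apply Rmult_le_pos. apply pow_le. pose proof (pos_INR (S k)); lra. apply pow_le; lra.
    - intros k. rewrite H by lia. rewrite Rabs_R0. apply Rmult_le_pos. apply Rabs_pos.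
      apply Rmult_le_pos. apply pow_le. pose proof (pos_INR k); lra. apply pow_le; lra. }
  split; auto. destruct X as [A B]. unfold sumZ.
  rewrite (Series_incr_1 _ A).
  rewrite (Series_ext (fun k => f (Z.of_nat (S k))) (fun _ => 0)) by (intros; apply H; lia).
  rewrite (Series_ext (fun k => f (- Z.of_nat (S k))%Z) (fun _ => 0)) by (intros; apply H; lia).
  rewrite Series_zero. simpl. ring.
Qed.

Lemma Mom_eq F a0 a1 a2 c0 c1 : Mom F a0 a1 a2 -> a0 = c0 -> a1 = c1 -> Mom F c0 c1 a2.
Proof. intros H -> ->. exact H. Qed.

Lemma Mom_unique F a0 a1 a2 c0 c1 c2 : Mom F a0 a1 a2 -> Mom F c0 c1 c2 -> a0 = c0 /\ a1 = c1 /\ a2 = c2.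
Proof. intros [_ _ _ A B C] [_ _ _ D E G]. repeat split; congruence. Qed.

Lemma mu0_mom b : Mom (mu b 0) 1 0 0.
Proof.
  assert (Z : forall k d, d <> 0%Z -> mom k (mu b 0) d = 0).
  { intros k d Hd. unfold mom. rewrite mu_0. destruct (Z.eqb_spec d 0); [lia|]. ring. }
  destruct (single (mom 0 (mu b 0)) (Z 0%nat)) as [A0 S0].
  destruct (single (mom 1 (mu b 0)) (Z 1%nat)) as [A1 S1].
  destruct (single (mom 2 (mu b 0)) (Z 2%nat)) as [A2 S2].
  constructor; auto; [rewrite S0|rewrite S1|rewrite S2]; unfold mom; rewrite mu_0; simpl; ring.
Qed.

Lemma bernoulli n t : 0 <= t <= 1 -> 1 - INR n * t <= (1 - t)^n.
Proof.
  intros Ht. induction n. simpl. lra.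
  rewrite S_INR. simpl. pose proof (pos_INR n). nra.
Qed.

Section B.
Variable b : nat.
Hypothesis Hb : (2 <= b)%nat.
Let X := (INR b - 1) / INR b.

Lemma Hbr : 2 <= INR b.
Proof. replace 2 with (INR 2) by reflexivity. apply le_INR; lia. Qed.

Lemma X_range : 0 < X < 1.
Proof. pose proof Hbr. unfold X. split. apply Rdiv_lt_0_compat; lra.
  apply Rmult_lt_reg_r with (INR b). lra. field_simplify; lra. Qed.

Lemma X_pow : 1 <= INR b * X ^ (b - 1).
Proof.
  pose proof Hbr. pose proof (bernoulli (b-1) (/ INR b)) as B.
  replace (1 - / INR b) with X in B by (unfold X; field; lra).
  rewrite minus_INR in B by lia. simpl INR in B.
  assert (0 <= / INR b <= 1). split. left. apply Rinv_0_lt_compat; lra.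
  rewrite <- Rinv_1. apply Rinv_le_contravar; lra.
  specialize (B H0).
  replace (1 - (INR b - 1) * / INR b) with (/ INR b) in B by (field; lra).
  apply Rmult_le_reg_l with (/ INR b). apply Rinv_0_lt_compat; lra.
  rewrite <- Rmult_assoc, Rinv_l, Rmult_1_l, Rmult_1_r by lra. exact B.
Qed.

Lemma mu1_rec d : d <> 1%Z -> mu b 1 d = mu b 1 (d - 1 + Z.of_nat b)%Z / INR b.
Proof.
  intros Hd. pose proof (mu_rec b 0 1 d Hb ltac:(lia)) as E.
  replace (b*0+1)%nat with 1%nat in E by lia. replace (0+1)%nat with 1%nat in E by lia.
  rewrite mu_0 in E. replace (Z.of_nat 1) with 1%Z in E by reflexivity.
  destruct (Z.eqb_spec (d-1) 0); [lia|]. rewrite E. simpl INR. field. pose proof Hbr. lra.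
Qed.

Lemma mu1_bound : forall j, mu b 1 (1 - Z.of_nat j)%Z <= INR b * X ^ j.
Proof.
  pose proof Hbr as Hbr. pose proof X_range as XR. pose proof X_pow as XP.
  intros j. induction j as [j IH] using lt_wf_ind.
  destruct (Nat.eq_dec j 0) as [->|Hj].
  - replace (1 - Z.of_nat 0)%Z with 1%Z by reflexivity. simpl pow. pose proof (mu_bounds b 1 1 Hb). lra.
  - rewrite mu1_rec by lia.
    assert (Xj : 0 <= X ^ j) by (apply pow_le; lra).
    destruct (Nat.lt_ge_cases j (b-1)) as [Hl|Hl].
    + rewrite mu_zero by lia. unfold Rdiv. rewrite Rmult_0_l. nra.
    + set (j' := (j - (b-1))%nat).
      replace (1 - Z.of_nat j - 1 + Z.of_nat b)%Z with (1 - Z.of_nat j')%Z by (unfold j'; lia).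
      specialize (IH j' ltac:(unfold j'; lia)).
      replace j with (j' + (b-1))%nat by (unfold j'; lia). rewrite pow_add.
      assert (Xj' : 0 <= X ^ j') by (apply pow_le; lra).
      apply Rle_trans with (INR b * X ^ j' / INR b). unfold Rdiv. apply Rmult_le_compat_r.
      left. apply Rinv_0_lt_compat; lra. exact IH.
      replace (INR b * X ^ j' / INR b) with (X ^ j') by (field; lra). nra.
Qed.

Lemma F1_pos k : mu b 1 (Z.of_nat k) <= INR b * X ^ k.
Proof.
  pose proof Hbr as Hbr. pose proof X_range as XR.
  destruct k as [|[|k]].
  - simpl. pose proof (mu_bounds b 1 0 Hb). lra.
  - replace (Z.of_nat 1) with 1%Z by reflexivity. pose proof (mu_bounds b 1 1 Hb). assert (INR b * X = INR b - 1) by (unfold X; field; lra). simpl pow. rewrite Rmult_1_r. lra.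
  - rewrite mu_zero by lia. apply Rmult_le_pos. lra. apply pow_le; lra.
Qed.

Lemma F1_neg k : mu b 1 (- Z.of_nat (S k))%Z <= INR b * X ^ k.
Proof.
  pose proof Hbr as Hbr. pose proof X_range as XR.
  replace (- Z.of_nat (S k))%Z with (1 - Z.of_nat (k+2))%Z by lia.
  eapply Rle_trans. apply mu1_bound. rewrite pow_add.
  assert (0 <= X^k) by (apply pow_le; lra). apply Rmult_le_compat_l; [lra|]. rewrite <- (Rmult_1_r (X^k)) at 2. apply Rmult_le_compat_l; auto. simpl; nra.
Qed.

Lemma mom_bound p (F : Z -> R) d B m : (p <= 2)%nat -> 0 <= F d <= B -> Rabs (IZR d) <= m -> 1 <= m ->
  Rabs (mom p F d) <= B * m^2.
Proof.
  intros Hp HF Hd Hm. unfold mom. rewrite Rabs_mult, (Rabs_pos_eq (F d)) by lra.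
  pose proof (pow_bound p (IZR d) m Hp Hd Hm). pose proof (Rabs_pos (IZR d ^ p)).
  assert (0 <= m^2) by nra. nra.
Qed.

Lemma F1_ex p : (p <= 2)%nat -> exZ (mom p (mu b 1)).
Proof.
  intros Hp. pose proof X_range as XR.
  apply exZ_bound with (INR b) X; auto.
  - intros k. eapply Rle_trans. apply mom_bound with (B := INR b * X^k) (m := INR k + 1); auto.
    pose proof (mu_bounds b 1 (Z.of_nat k) Hb). split. lra. apply F1_pos.
    rewrite <- INR_IZR_INZ, Rabs_pos_eq; pose proof (pos_INR k); lra.
    pose proof (pos_INR k); lra. right; ring.
  - intros k. eapply Rle_trans. apply mom_bound with (B := INR b * X^k) (m := INR k + 1); auto.
    pose proof (mu_bounds b 1 (- Z.of_nat (S k))%Z Hb). split. lra. apply F1_neg.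
    rewrite opp_IZR, Rabs_Ropp, <- INR_IZR_INZ, S_INR, Rabs_pos_eq; pose proof (pos_INR k); lra.
    pose proof (pos_INR k); lra. right; ring.
Qed.

Lemma mu1_mom : exists s2, Mom (mu b 1) 1 0 s2.
Proof.
  pose proof Hbr as Hbr.
  assert (M : Mom (mu b 1) (sumZ (mom 0 (mu b 1))) (sumZ (mom 1 (mu b 1))) (sumZ (mom 2 (mu b 1)))).
  { constructor; auto; apply F1_ex; lia. }
  set (s0 := sumZ (mom 0 (mu b 1))) in *. set (s1 := sumZ (mom 1 (mu b 1))) in *.
  set (s2 := sumZ (mom 2 (mu b 1))) in *.
  assert (E : forall d, mu b 1 d = (INR b - 1) / INR b * mu b 0 (d - 1)%Z + 1 / INR b * mu b 1 (d - (1 - Z.of_nat b))%Z).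
  { intros d. pose proof (mu_rec b 0 1 d Hb ltac:(lia)) as E.
    replace (b*0+1)%nat with 1%nat in E by lia. replace (0+1)%nat with 1%nat in E by lia.
    replace (Z.of_nat 1) with 1%Z in E by reflexivity. rewrite E.
    replace (d - 1 + Z.of_nat b)%Z with (d - (1 - Z.of_nat b))%Z by lia.
    rewrite minus_INR by lia. simpl INR. field. lra. }
  pose proof (mix_mom _ _ _ _ _ _ _ _ _ _ _ _ _ E (mu0_mom b) M) as M2.
  destruct (Mom_unique _ _ _ _ _ _ _ M M2) as [A [B _]].
  rewrite minus_IZR, <- INR_IZR_INZ in B. simpl IZR in B.
  assert (A' : s0 * INR b = INR b - 1 + s0) by (rewrite A at 1; field; lra).
  assert (H0 : s0 = 1).
  { assert (Q : (s0 - 1) * (INR b - 1) = 0) by nra.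
    apply Rmult_integral in Q. destruct Q; lra. }
  rewrite H0 in B.
  assert (B' : s1 * INR b = INR b - 1 + s1 + (1 - INR b)) by (rewrite B at 1; field; lra).
  assert (H1 : s1 = 0).
  { assert (Q : s1 * (INR b - 1) = 0) by nra.
    apply Rmult_integral in Q. destruct Q; lra. }
  exists s2. rewrite <- H0, <- H1. exact M.
Qed.

Lemma mix_r (rt r0 : nat) : (r0 < b)%nat -> forall d,
  mu b (b*rt+r0)%nat d = INR (b - r0) / INR b * mu b rt (d - Z.of_nat r0)%Z
    + INR r0 / INR b * mu b (rt+1)%nat (d - (Z.of_nat r0 - Z.of_nat b))%Z.
Proof.
  intros Hr d. rewrite mu_rec by auto.
  replace (d - Z.of_nat r0 + Z.of_nat b)%Z with (d - (Z.of_nat r0 - Z.of_nat b))%Z by lia.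
  pose proof Hbr. field. lra.
Qed.

Lemma good_all : forall r, exists s2, Mom (mu b r) 1 0 s2.
Proof.
  pose proof Hbr as Hbr.
  intros r. induction r as [r IH] using lt_wf_ind.
  destruct (Nat.eq_dec r 0) as [->|H0]. { exists 0. apply mu0_mom. }
  destruct (Nat.eq_dec r 1) as [->|H1]. { apply mu1_mom. }
  assert (Er : r = (b*(r/b) + r mod b)%nat) by (apply Nat.div_mod; lia).
  assert (Hr : (r mod b < b)%nat) by (apply Nat.mod_upper_bound; lia).
  set (rt := (r/b)%nat) in *. set (r0 := (r mod b)%nat) in *.
  destruct (Nat.eq_dec r0 0) as [Z0|Z0].
  - destruct (IH rt ltac:(nia)) as [s M]. exists s.
    eapply Mom_ext; [|exact M]. intros d. rewrite Er, mix_r by auto. rewrite Z0.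
    rewrite Nat.sub_0_r. simpl INR. replace (d - Z.of_nat 0)%Z with d by lia. field. lra.
  - destruct (IH rt ltac:(nia)) as [g M1]. destruct (IH (rt+1)%nat ltac:(nia)) as [h M2].
    pose proof (mix_mom _ _ _ _ _ _ _ _ _ _ _ _ _ (mix_r rt r0 Hr) M1 M2) as M.
    rewrite <- Er in M. eexists. eapply Mom_eq. exact M.
    + rewrite minus_INR by lia. field. lra.
    + rewrite minus_INR, minus_IZR, <- !INR_IZR_INZ by lia. field. lra.
Qed.

End B.

Lemma Var_eq b r s2 : Mom (mu b r) 1 0 s2 -> Var_mu b r = s2.
Proof.
  intros M. destruct M as [_ _ _ _ S1 S2].
  unfold Var_mu, mean_mu.
  rewrite (sumZ_ext (fun d => IZR d * mu b r d) (mom 1 (mu b r))) by (intros; unfold mom; ring).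
  rewrite S1, <- S2. apply sumZ_ext. intros; unfold mom; ring.
Qed.

Theorem mainTheorem10 (b : nat) (Hb : (2 <= b)%nat) (rt r0 : nat) (Hr0 : (r0 < b)%nat) :
  Var_mu b (b * rt + r0) =
    INR (b - r0) / INR b * Var_mu b rt
    + INR r0 / INR b * Var_mu b (rt + 1)
    + INR r0 * INR (b - r0).
Proof.
  pose proof (Hbr b Hb) as Hbr.
  destruct (good_all b Hb rt) as [g M1]. destruct (good_all b Hb (rt+1)%nat) as [h M2].
  pose proof (mix_mom _ _ _ _ _ _ _ _ _ _ _ _ _ (mix_r b Hb rt r0 Hr0) M1 M2) as M.
  destruct (good_all b Hb (b*rt+r0)%nat) as [s M3].
  destruct (Mom_unique _ _ _ _ _ _ _ M M3) as [_ [_ E]].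
  rewrite (Var_eq _ _ _ M3), (Var_eq _ _ _ M1), (Var_eq _ _ _ M2), <- E.
  rewrite minus_INR, minus_IZR, <- !INR_IZR_INZ by lia. field. lra.
Qed.
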